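(* Let $\Bbbk$ be a field of characteristic $0$, $n\ge2$, and let $(A,\mu,\alpha)$ be a multiplicative $n$-ary totally Hom-associative algebra over $\Bbbk$. Then for each integer $k\ge0$, $A_k=(A,\alpha^{2^k-1}\circ\mu,\alpha^{2^k})$ (all twisting maps equal to $\alpha^{2^k}$) is a multiplicative $n$-ary totally Hom-associative algebra.
   Context: An $n$-ary Hom-algebra $(V,\mu,(\alpha_1,\ldots,\alpha_{n-1}))$ is a vector space $V$ with an $n$-linear map $\mu$ (written $\mu(a_1,\ldots,a_n)=(a_1\cdots a_n)$) and linear maps $\alpha_i\colon V\to V$. It is multiplicative if all $\alpha_i$ equal one map $\alpha$ and $\alpha\circ\mu=\mu\circ\alpha^{\otimes n}$; such a Hom-algebra is written $(V,\mu,\alpha)$. $\alpha^m$ denotes the $m$-fold composite, $\alpha^0=\mathrm{Id}$. It is $n$-ary totally Hom-associative if for every $i\in\{1,\ldots,n-1\}$ and all $a_1,\ldots,a_{2n-1}$: $(\alpha_1(a_1),\ldots,\alpha_{i-1}(a_{i-1}),(a_i\cdots a_{i+n-1}),\alpha_i(a_{i+n}),\ldots,\alpha_{n-1}(a_{2n-1}))=(\alpha_1(a_1),\ldots,\alpha_i(a_i),(a_{i+1}\cdots a_{i+n}),\alpha_{i+1}(a_{i+n+1}),\ldots,\alpha_{n-1}(a_{2n-1}))$. *)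

(* Defs.v *)
From HB Require Import structures.
From mathcomp Require Import all_boot all_order all_algebra.
Set Implicit Arguments. Unset Strict Implicit. Unset Printing Implicit Defensive.
Import GRing.Theory.
Local Open Scope ring_scope.

Definition upd (V : Type) (n : nat) (x : 'I_n -> V) (i : 'I_n) (v : V) : 'I_n -> V :=
  fun j => if j == i then v else x j.

Definition multilinear (K : fieldType) (V : lmodType K) (n : nat)
  (mu : ('I_n -> V) -> V) : Prop :=
  forall (x : 'I_n -> V) (i : 'I_n) (c : K) (y z : V),
    mu (upd x i (c *: y + z)) = c *: mu (upd x i y) + mu (upd x i z).

Definition linmap (K : fieldType) (V : lmodType K) (f : V -> V) : Prop :=
  forall (c : K) (y z : V), f (c *: y + z) = c *: f y + f z.

(* Bracket placed at 0-indexed position p among the n outer slots, with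
   twisting maps alphas 0 .. n-2 (paper's alpha_1 .. alpha_{n-1}) applied, in
   order, to the outer entries; a is the list a_1 .. a_{2n-1} (0-indexed). *)
Definition bracket_at (V : Type) (n : nat) (mu : ('I_n -> V) -> V)
  (alphas : nat -> V -> V) (p : nat) (a : nat -> V) : V :=
  mu (fun j : 'I_n =>
        if (j < p)%N then alphas j (a j)
        else if (j == p :> nat) then mu (fun l : 'I_n => a (p + l)%N)
        else alphas j.-1 (a (j + n.-1)%N)).

(* n-ary totally Hom-associative: for paper's i in {1..n-1}, i.e. p = i-1 in
   {0..n-2}, the bracket at position p equals the bracket at position p+1. *)
Definition totally_hom_assoc (V : Type) (n : nat) (mu : ('I_n -> V) -> V)
  (alphas : nat -> V -> V) : Prop :=
  forall (p : nat), (p.+1 < n)%N -> forall a : nat -> V,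
    bracket_at mu alphas p a = bracket_at mu alphas p.+1 a.

Definition multiplicative_op (V : Type) (n : nat) (mu : ('I_n -> V) -> V)
  (alpha : V -> V) : Prop :=
  forall x : 'I_n -> V, alpha (mu x) = mu (fun j => alpha (x j)).

Definition mult_nary_THA (K : fieldType) (V : lmodType K) (n : nat)
  (mu : ('I_n -> V) -> V) (alpha : V -> V) : Prop :=
  [/\ multilinear mu, linmap alpha, multiplicative_op mu alpha
    & totally_hom_assoc mu (fun _ => alpha)].

(* Main.v *)
Require Import Defs.
From mathcomp Require Import all_boot all_order all_algebra.
From Stdlib Require Import FunctionalExtensionality.
Local Open Scope ring_scope.

Lemma iter_mult (V : Type) (n : nat) (mu : ('I_n -> V) -> V) (alpha : V -> V) :
  multiplicative_op mu alpha -> forall j x,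
  iter j alpha (mu x) = mu (fun i => iter j alpha (x i)).
Proof.
move=> H; elim=> [|j IH] x /=; first by congr mu; apply: functional_extensionality.
by rewrite IH H.
Qed.

Lemma iter_lin (K : fieldType) (V : lmodType K) (alpha : V -> V) :
  linmap alpha -> forall j, linmap (iter j alpha).
Proof.
move=> H; elim=> [|j IH] c y z //=.
by rewrite IH H.
Qed.

Lemma gen (K : fieldType) (V : lmodType K) (n : nat)
  (mu : ('I_n -> V) -> V) (alpha : V -> V) m :
  mult_nary_THA mu alpha ->
  mult_nary_THA (fun x => iter m alpha (mu x)) (iter m.+1 alpha).
Proof.
case=> Hml Hl Hm Ht; split.
- move=> x i c y z; by rewrite Hml iter_lin.
- exact: iter_lin.
- move=> x; rewrite -iterD !iter_mult //.
  congr mu; apply: functional_extensionality => j.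
  by rewrite -!iterD addnC.
- move=> p hp a.
  have E : forall q, bracket_at (fun x => iter m alpha (mu x)) (fun _ => iter m.+1 alpha) q a
     = iter m alpha (bracket_at mu (fun _ => alpha) q (fun i => iter m alpha (a i))).
    move=> q; rewrite /bracket_at; congr (iter m alpha (mu _)).
    apply: functional_extensionality => j.
    case: ifP => _; first by [].
    case: ifP => _; last by [].
    by rewrite !iter_mult.
  by rewrite !E Ht.
Qed.

Theorem corollary2p6 (K : fieldType) (V : lmodType K) (n : nat)
  (mu : ('I_n -> V) -> V) (alpha : V -> V) :
  [pchar K] =i pred0 ->
  (2 <= n)%N ->
  mult_nary_THA mu alpha ->
  forall k : nat,
    mult_nary_THA (fun x => iter (2 ^ k - 1) alpha (mu x)) (iter (2 ^ k) alpha).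
Proof.
move=> _ _ H k.
have e : (2 ^ k = (2 ^ k - 1).+1)%N by rewrite subn1 prednK // expn_gt0.
rewrite {2}e; exact: gen.
Qed.
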